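(* Let $A_n=S_n\wr \mathrm{Aut}(\mathcal{T}_d)$ with the cloning maps $\kappa_k^n$ described in the context, and let $\mathscr{T}(S_*\wr\mathrm{Aut}(\mathcal{T}_d))$ be the set of equivalence classes $[T_-,f,T_+]$ of triples described in the context, with the multiplication described there. Then $\mathscr{T}(S_*\wr\mathrm{Aut}(\mathcal{T}_d))$ is a group, and the map $[T_-,f,T_+]\mapsto ((T_-,f,T_+))$ is a well-defined group isomorphism $\mathscr{T}(S_*\wr\mathrm{Aut}(\mathcal{T}_d))\cong \mathrm{AAut}(\mathcal{T}_d)$.
   Context: Fix $d\ge 2$ and the alphabet $X=\{1,\dots,d\}$; $\mathcal{T}_d$ is the infinite rooted $d$-ary tree with vertex set the set $X^*$ of finite words (root the empty word, $u$ adjacent to $ux$ for $x\in X$), and $\partial\mathcal{T}_d$ its boundary (infinite words). Permutations act on the left, and $\sigma\tau$ means first $\tau$ then $\sigma$. For a group $G$, $S_n\wr G=S_n\ltimes G^n$ with elements written $\sigma(g_1,\dots,g_n)$ and multiplication $\sigma(f_1,\dots,f_n)\,\tau(g_1,\dots,g_n)=\sigma\tau(f_{\tau(1)}g_1,\dots,f_{\tau(n)}g_n)$. Every $f\in\mathrm{Aut}(\mathcal{T}_d)$ has a unique wreath recursion $f=\rho(f)(f_1,\dots,f_d)$, where $\rho(f)\in S_d$ and $f_x\in\mathrm{Aut}(\mathcal{T}_d)$ (the state of $f$ at $x$) satisfy $f(xw)=\rho(f)(x)\,f_x(w)$ for $x\in X$, $w\in X^*$. Almost-automorphisms: a finite rooted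 complete subtree of $\mathcal{T}_d$ is a finite subtree containing the root in which each vertex has either $0$ or all $d$ of its children; its leaves are ordered left to right (lexicographically). If $T_-,T_+$ are such subtrees each with $n$ leaves ($u_1,\dots,u_n$ the leaves of $T_-$, $v_1,\dots,v_n$ those of $T_+$), $\sigma\in S_n$, $f_i\in\mathrm{Aut}(\mathcal{T}_d)$, then $((T_-,\sigma(f_1,\dots,f_n),T_+))$ denotes the homeomorphism of $\partial\mathcal{T}_d$ sending $v_iw\mapsto u_{\sigma(i)}f_i(w)$. $\mathrm{AAut}(\mathcal{T}_d)$ is the group of all such homeomorphisms. Symmetric cloning maps: for $1\le k\le n$ and $\sigma\in S_n$, $(\sigma)\varsigma_k^n\in S_{n+d-1}$ is defined by: for $i<k$, $i\mapsto\sigma(i)$ if $\sigma(i)<\sigma(k)$ and $i\mapsto\sigma(i)+d-1$ if $\sigma(i)>\sigma(k)$; for $k\le i\le k+d-1$, $i\mapsto \sigma(k)+i-k$; for $i>k+d-1$, $i\mapsto\sigma(i-d+1)$ if $\sigma(i-d+1)<\sigma(k)$ and $i\mapsto \sigma(i-d+1)+d-1$ if $\sigma(i-d+1)>\sigma(k)$. For $\tau\in S_d$ let $\tau^{(k)}\in S_{n+d-1}$ be the permutation sending $k+j-1\mapsto k+\tau(j)-1$ for $1\le j\le d$ and fixing all other points. Define $\rho_n(\sigma(f_1,\dots,f_n))=\sigma$ and $\kappa_k^n:A_n\to A_{n+d-1}$ by $(\sigma(f_1,\dots,f_n))\kappa_k^n=(\sigma)\varsigma_k^n\,\rho(f_k)^{(k)}\,(f_1,\dots,f_{k-1},f_k^1,\dots,f_k^d,f_{k+1},\dots,f_n)$,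 where $f_k=\rho(f_k)(f_k^1,\dots,f_k^d)$ is the wreath recursion. Thompson group $\mathscr{T}(S_*\wr G)$ for $G\le\mathrm{Aut}(\mathcal{T}_d)$ with $\kappa_k^n(S_n\wr G)\subseteq S_{n+d-1}\wr G$: consider triples $(T_-,g,T_+)$ with $T_\pm$ finite rooted complete subtrees of $\mathcal{T}_d$ with the same number $n$ of leaves and $g\in S_n\wr G$. An expansion of $(T_-,g,T_+)$ is $(T_-',(g)\kappa_k^n,T_+')$ where $T_+'$ is $T_+$ with a $d$-caret (the $d$ children) added at its $k$th leaf and $T_-'$ is $T_-$ with a $d$-caret added at its $\rho_n(g)(k)$th leaf; reductions are the inverses. $[T_-,g,T_+]$ denotes the class under the equivalence relation generated by expansions. The product of two classes is computed by choosing representatives $(T_-,f,T_+)$, $(U_-,g,U_+)$ with $T_+=U_-$ (always possible by expanding) and setting $[T_-,f,T_+][U_-,g,U_+]=[T_-,fg,U_+]$. *)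

(* Defs.v *)
From HB Require Import structures.
From mathcomp Require Import all_boot all_order all_fingroup.
From Stdlib Require Import Relations.
Set Implicit Arguments. Unset Strict Implicit. Unset Printing Implicit Defensive.

(* Conventions: the alphabet X = {1,...,d} is represented by 'I_d = {0,...,d-1};
   leaves / positions are indexed from 0 (i.e. index i here is index i+1 in the paper).
   Words: seq 'I_d, first letter next to the root; the children of u are rcons u x. *)

Section Defs.
Variable d : nat.

Definition word := seq 'I_d.

Definition adj (u v : word) : Prop :=
  (exists x, v = rcons u x) \/ (exists x, u = rcons v x).

Definition is_aut (f : word -> word) : Prop :=
  bijective f /\ forall u v, adj u v <-> adj (f u) (f v).

(* wreath recursion f = rho(f)(f_1,...,f_d):  f (x w) = rho f x :: state f x w *)
Definition rho (f : word -> word) (x : 'I_d) : 'I_d := head x (f [:: x]).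
Definition state (f : word -> word) (x : 'I_d) : word -> word :=
  fun w => behead (f (x :: w)).

(* action of an automorphism on the boundary (infinite words) *)
Definition bdry := nat -> 'I_d.
Definition aut_bd (f : word -> word) (xi : bdry) : bdry :=
  fun m => nth (xi m) (f (mkseq xi m.+1)) m.

Inductive dtree := Lf | Nd of dtree ^ d.

(* leaves, ordered left to right (lexicographically) *)
Fixpoint leaves (t : dtree) : seq word :=
  match t with
  | Lf => [:: [::]]
  | Nd f => flatten (codom [ffun x : 'I_d => map (cons x) (leaves (f x))])
  end.

Fixpoint graft (t : dtree) (u : word) : dtree :=
  match t, u with
  | Lf, [::] => Nd [ffun _ => Lf]
  | Nd f, x :: u' => Nd [ffun y => if y == x then graft (f y) u' else f y]
  | _, _ => t
  end.

Definition add_caret (t : dtree) (k : nat) : dtree := graft t (nth [::] (leaves t) k).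

Definition mkperm n (g : 'I_n -> 'I_n) : {perm 'I_n} :=
  match injectiveP g with ReflectT H => perm H | ReflectF _ => 1%g end.
Definition mkperm_nat n (g : nat -> nat) : {perm 'I_n} :=
  mkperm (fun i : 'I_n => insubd i (g i)).
Definition pnat n (s : {perm 'I_n}) (j : nat) : nat :=
  if (insub j : option 'I_n) is Some x then val (s x) else j.
Definition fnat n (fs : 'I_n -> word -> word) (j : nat) : word -> word :=
  if (insub j : option 'I_n) is Some x then fs x else id.
Definition rho_nat (f : word -> word) (j : nat) : nat :=
  if (insub j : option 'I_d) is Some x then val (rho f x) else j.
Definition state_nat (f : word -> word) (j : nat) : word -> word :=
  if (insub j : option 'I_d) is Some x then state f x else id.

(* ---------- triples (T_-, sigma(f_1,...,f_n), T_+) ---------- *)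
Record triple := Triple {
  tm : dtree; tp : dtree; tn : nat;
  tperm : {perm 'I_tn};
  tfs : 'I_tn -> word -> word }.
Arguments tperm : clear implicits.
Arguments tfs : clear implicits.
Arguments Triple : clear implicits.

Definition valid (t : triple) : Prop :=
  size (leaves (tm t)) = tn t /\ size (leaves (tp t)) = tn t /\
  forall i, is_aut (tfs t i).

Definition clone_nat (s : nat -> nat) (k i : nat) : nat :=
  let adjv j := if s j < s k then s j else s j + d.-1 in
  if i < k then adjv i
  else if i < k + d then s k + (i - k)
  else adjv (i - d.-1).

Definition block_nat (tau : nat -> nat) (k i : nat) : nat :=
  if (k <= i) && (i < k + d) then k + tau (i - k) else i.

Definition expand (t : triple) (k : 'I_(tn t)) : triple :=
  let s := pnat (tperm t) in
  let fk := tfs t k in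
  Triple (add_caret (tm t) (val (tperm t k))) (add_caret (tp t) k) (tn t + d.-1)
    (* paper: (sigma)varsigma_k * rho(f_k)^{(k)}, i.e. first rho^{(k)} then varsigma *)
    (mkperm_nat (tn t + d.-1) (fun i => clone_nat s k (block_nat (rho_nat fk) k i)))
    (fun i => if i < k then fnat (tfs t) i
              else if i < k + d then state_nat fk (i - k)
              else fnat (tfs t) (i - d.-1)).

Arguments expand : clear implicits.
Definition expands (t t' : triple) : Prop :=
  valid t /\ exists k : 'I_(tn t), t' = expand t k.

Definition tequiv : triple -> triple -> Prop := clos_refl_sym_trans triple expands.

(* product of representatives with tp t = tm u : [T_-, f g, U_+],
   where sigma(f) tau(g) = sigma tau (f_{tau(i)} g_i) *)
Definition tmul (t u : triple) : triple :=
  Triple (tm t) (tp u) (tn u)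
    (mkperm_nat (tn u) (fun i => pnat (tperm t) (pnat (tperm u) i)))
    (fun i => fnat (tfs t) (pnat (tperm u) i) \o tfs u i).

Definition ident (T : dtree) : triple :=
  Triple T T (size (leaves T)) 1%g (fun _ => id).

Definition aa (t : triple) (xi : bdry) : bdry :=
  let L := leaves (tp t) in
  let i := find (fun v => v == mkseq xi (size v)) L in
  match (insub i : option 'I_(tn t)) with
  | Some j =>
      let v := nth [::] L i in
      let u := nth [::] (leaves (tm t)) (val (tperm t j)) in
      let fw := aut_bd (tfs t j) (fun m => xi (size v + m)) in
      fun m => if m < size u then nth (xi m) u m else fw (m - size u)
  | None => xi
  end.

Definition is_AAut (h : bdry -> bdry) : Prop :=
  exists t, valid t /\ forall xi, h xi =1 aa t xi.

End Defs.

Arguments tequiv {d}.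
Arguments expands {d}.

(* Main.v *)
Require Import Defs.
From HB Require Import structures.
From mathcomp Require Import all_boot all_order all_fingroup.
From Stdlib Require Import Relations.
From mathcomp Require Import zify.
From Stdlib Require Import FunctionalExtensionality ClassicalEpsilon.
Set Implicit Arguments. Unset Strict Implicit. Unset Printing Implicit Defensive.

Section Aut.
Variable d : nat.
Local Notation word := (word d).
Local Notation bdry := (bdry d).

Lemma adj_sym (u v : word) : adj u v <-> adj v u.
Proof. rewrite /adj; tauto. Qed.

Lemma rcons_nil_neq (u : word) x : [::] <> rcons u x.
Proof. by case: u. Qed.

Lemma aut_inv (f : word -> word) : is_aut f -> exists g, is_aut g /\ cancel f g /\ cancel g f.
Proof.
move=> [[g fg gf] H]; exists g; split; last by split.
split; first by exists f.
by move=> u v; rewrite (H (g u)) !gf.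
Qed.

Lemma aut_id : is_aut (@id word).
Proof. by split; [exists id|]. Qed.

Lemma aut_comp (f g : word -> word) : is_aut f -> is_aut g -> is_aut (f \o g).
Proof.
move=> [[f' a b] Hf] [[g' c e] Hg]; split.
  by exists (g' \o f') => x /=; [rewrite a c|rewrite e b].
by move=> u v /=; rewrite Hg Hf.
Qed.

Definition nbrs (u : word) : seq word :=
  map (rcons u) (enum 'I_d) ++ (if u is a :: u' then [:: belast a u'] else [::]).

Lemma adj_nbrs u v : adj u v -> v \in nbrs u.
Proof.
case=> [[x ->]|[x ->]].
  by rewrite mem_cat; apply/orP; left; apply/mapP; exists x => //; rewrite mem_enum.
rewrite mem_cat; apply/orP; right; case: v => [|a v] //=.
by rewrite belast_rcons inE.
Qed.

Lemma nbrs_adj u v : v \in nbrs u -> adj u v.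
Proof.
rewrite mem_cat => /orP [/mapP [x _ ->]|]; first by left; exists x.
case: u => [|a u] //=; rewrite inE => /eqP ->; right.
exists (last a u); by rewrite -lastI.
Qed.

Lemma uniq_nbrs u : u != [::] -> uniq (nbrs u).
Proof.
case: u => [|a u] // _; rewrite cat_uniq /= andbT.
rewrite map_inj_uniq ?enum_uniq; last by move=> x y h; case: (@rcons_inj _ (a :: u) (a :: u) x y h).
rewrite ?orbF; apply/negP => /mapP [x _].
by move=> /(congr1 size); rewrite size_belast /= size_rcons; lia.
Qed.

Lemma size_nbrs u : u != [::] -> size (nbrs u) = d.+1.
Proof. by case: u => [|a u] // _; rewrite size_cat size_map size_enum_ord /= addn1. Qed.

Lemma aut_root (f : word -> word) : is_aut f -> f [::] = [::].
Proof.
move=> [[g fg gf] H]; apply/eqP; apply/negPn/negP => hne.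
have: size (nbrs (f [::])) <= size (map f (map (fun x : 'I_d => [:: x]) (enum 'I_d))).
  apply: uniq_leq_size; first exact: uniq_nbrs.
  move=> w /nbrs_adj; rewrite -{1}(gf w) -H => [[[x hx]|[x hx]]].
    apply/mapP; exists [:: x]; last by rewrite -(gf w) hx.
    by apply/mapP; exists x => //; rewrite mem_enum.
  by case: (rcons_nil_neq hx).
by rewrite size_nbrs // !size_map -enumT size_enum_ord ltnn.
Qed.

Lemma aut_child (f : word -> word) u x : is_aut f -> exists y, f (rcons u x) = rcons (f u) y.
Proof.
move=> Ha; have Hr := aut_root Ha; move: Ha => [[g fg gf] H].
elim/last_ind: u x => [|u x' IH] x.
  have: adj [::] (rcons [::] x) by left; exists x.
  rewrite H Hr => [[[y hy]|[y hy]]]; first by exists y.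
  by case: (f [:: x]) hy.
have: adj (rcons u x') (rcons (rcons u x') x) by left; exists x.
rewrite H => [[[y hy]|[y hy]]]; first by exists y.
case: (IH x') => y' hy'; move: hy; rewrite hy' => /rcons_inj [] /(can_inj fg) hh _.
by move: (congr1 size hh); rewrite !size_rcons; lia.
Qed.

Lemma aut_size (f : word -> word) u : is_aut f -> size (f u) = size u.
Proof.
move=> Ha; elim/last_ind: u => [|u x IH]; first by rewrite aut_root.
by case: (aut_child u x Ha) => y ->; rewrite !size_rcons IH.
Qed.

Lemma aut_take (f : word -> word) w n : is_aut f -> f (take n w) = take n (f w).
Proof.
move=> Ha.
suff H: forall v u, take (size u) (f (u ++ v)) = f u.
  case: (leqP (size w) n) => hn.
    by rewrite !take_oversize // aut_size.
  by rewrite -{2}(cat_take_drop n w) -(H (drop n w) (take n w)) size_take hn.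
elim/last_ind => [|v x IH] u; first by rewrite cats0 take_oversize // aut_size.
rewrite -rcons_cat; case: (aut_child (u ++ v) x Ha) => y ->.
rewrite -cats1 take_cat aut_size // size_cat.
case: ltnP => h; first by rewrite IH.
have v0 : v = [::] by apply/size0nil; lia.
by subst v; rewrite /= !addn0 subnn take0 !cats0.
Qed.

Lemma aut_cons (f : word -> word) x w : is_aut f -> f (x :: w) = rho f x :: state f x w.
Proof.
move=> Ha; have := aut_take (x :: w) 1 Ha; rewrite /= take0.
have := aut_size [:: x] Ha; rewrite /rho /state.
by case: (f [:: x]) => [|a [|]] //= _; case: (f (x :: w)) => [|b s] //= [->].
Qed.

Lemma aut_state (f : word -> word) x : is_aut f -> is_aut (state f x).
Proof.
move=> Ha; case: (aut_inv Ha) => g [Hg [fg gf]].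
have e2 : rho g (rho f x) = x.
  by have := fg [:: x]; rewrite (aut_cons _ _ Ha) (aut_cons _ _ Hg) => - [].
split.
  exists (state g (rho f x)) => w.
    by rewrite {1}/state -[rho f x :: _](aut_cons _ _ Ha) fg.
  by rewrite {1}/state -{1}e2 -[rho g _ :: _](aut_cons _ _ Hg) gf.
move=> u v; have Hf := Ha; case: Ha => _ H.
have E2: forall y (a b : word), adj a b <-> adj (y :: a) (y :: b).
  move=> y a b; split.
    by case=> [[z ->]|[z ->]]; [left|right]; exists z.
  case=> [[z hy]|[z hy]]; [left|right]; exists z.
    by move: hy => /= [].
  by move: hy => /= [].
by rewrite (E2 x) H !aut_cons // -/(is_aut f); symmetry; apply: E2.
Qed.

Lemma aut_single (f : word -> word) x : is_aut f -> f [:: x] = [:: rho f x].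
Proof.
move=> Ha; rewrite aut_cons //; congr (_ :: _).
by apply/size0nil; rewrite aut_size //; apply: aut_state.
Qed.

Lemma aut_rho_inj (f : word -> word) : is_aut f -> injective (rho f).
Proof.
move=> Ha x y e; have Hf := Ha; case: Ha => [[g fg _] _].
by have := fg [:: x]; rewrite aut_single // e -aut_single // fg => - [].
Qed.
End Aut.

Section Bdry.
Variable d : nat.
Local Notation word := (word d).
Local Notation bdry := (bdry d).

Definition catb (u : word) (e : bdry) : bdry :=
  fun m => if m < size u then nth (e 0) u m else e (m - size u).
Definition shift (e : bdry) n : bdry := fun m => e (n + m).
Definition pref (v : word) (xi : bdry) : bool := v == mkseq xi (size v).

Lemma pref_catb v e : pref v (catb v e).
Proof.
apply/eqP; apply: (@eq_from_nth _ (e 0)); first by rewrite size_mkseq.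
by move=> i hi; rewrite nth_mkseq // /catb hi.
Qed.

Lemma shift_catb v e : shift (catb v e) (size v) = e.
Proof.
apply: functional_extensionality => m; rewrite /shift /catb.
by rewrite ltnNge leq_addr /= addKn.
Qed.

Lemma catb_shift v xi : pref v xi -> catb v (shift xi (size v)) = xi.
Proof.
move/eqP => hv; apply: functional_extensionality => m; rewrite /shift /catb.
case: ltnP => h; last by rewrite subnKC.
by rewrite hv nth_mkseq // size_mkseq.
Qed.

Lemma mkseq_catb u e : mkseq (catb u e) (size u) = u.
Proof. by apply/esym/eqP; apply: pref_catb. Qed.

Lemma catb_cat u v e : catb u (catb v e) = catb (u ++ v) e.
Proof.
apply: functional_extensionality => m; rewrite /catb size_cat.
case: ltnP => h1.
  by rewrite ltn_addr // nth_cat h1; exact: set_nth_default.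
rewrite nth_cat (ltnNge m (size u)) h1 /= -(ltn_subLR _ h1).
by case: ltnP => h2 //; rewrite subnDA.
Qed.

Lemma pref_take u e w : size w <= size u -> pref w (catb u e) -> w = take (size w) u.
Proof.
move=> hs /eqP hw; apply: (@eq_from_nth _ (e 0)); first by rewrite size_takel.
move=> i hi; rewrite nth_take // {1}hw nth_mkseq // /catb.
have -> : i < size u by lia.
by [].
Qed.

Lemma mkseq_aut_bd (f : word -> word) e n : is_aut f ->
  mkseq (aut_bd f e) n = f (mkseq e n).
Proof.
move=> Ha; apply: (@eq_from_nth _ (e 0)); first by rewrite size_mkseq aut_size // size_mkseq.
rewrite size_mkseq => i hi; rewrite nth_mkseq // /aut_bd.
have -> : mkseq e i.+1 = take i.+1 (mkseq e n).
  apply: (@eq_from_nth _ (e 0)); first by rewrite size_takel size_mkseq.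
  by rewrite size_mkseq => j hj; rewrite nth_take // !nth_mkseq //; lia.
rewrite aut_take // nth_take //; apply: set_nth_default.
by rewrite aut_size // size_mkseq.
Qed.

Lemma aut_bd_comp (f g : word -> word) e : is_aut f -> is_aut g ->
  aut_bd f (aut_bd g e) = aut_bd (f \o g) e.
Proof.
move=> Hf Hg; apply: functional_extensionality => m.
rewrite {1}/aut_bd mkseq_aut_bd //= /aut_bd; apply: set_nth_default.
by rewrite (aut_size _ Hf) (aut_size _ Hg) size_mkseq.
Qed.

Lemma aut_bd_id (e : bdry) : aut_bd id e = e.
Proof.
by apply: functional_extensionality => m; rewrite /aut_bd nth_mkseq.
Qed.

Lemma aut_bd_cons (f : word -> word) e : is_aut f ->
  aut_bd f e = catb [:: rho f (e 0)] (aut_bd (state f (e 0)) (shift e 1)).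
Proof.
move=> Ha; apply: functional_extensionality => m; rewrite /catb /=.
case: m => [|m] /=.
  by rewrite /aut_bd /= aut_single.
have E : mkseq e m.+2 = e 0 :: mkseq (shift e 1) m.+1.
  rewrite /mkseq /shift /=.
  have -> : iota 2 m = map (addn 1) (iota 1 m) by rewrite -(iotaDl 1 1).
  by rewrite -map_comp.
rewrite subn1 /= /aut_bd E aut_cons //.
Qed.

Lemma aut_word (f : word -> word) w e : is_aut f -> f w = mkseq (aut_bd f (catb w e)) (size w).
Proof. by move=> Ha; rewrite mkseq_aut_bd // mkseq_catb. Qed.

Hypothesis Hd : 1 < d.

Lemma rigid_size (u u' : word) (f f' : word -> word) : is_aut f -> is_aut f' ->
  (forall e, catb u (aut_bd f e) = catb u' (aut_bd f' e)) -> size u <= size u'.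
Proof.
move=> Hf Hf' H; rewrite leqNgt; apply/negP => hlt.
set m := size u'.
have y0 : 'I_d by exists 0; lia.
have hnth := fun e => congr1 (fun h => h m) (H e).
set y := nth y0 u m.
pose z : 'I_d := if nat_of_ord y == 0 then Ordinal Hd else Ordinal (ltnW Hd).
have hz : z != y by rewrite /z; case: (nat_of_ord y =P 0) => h; apply/eqP => /(congr1 val) /=; lia.
case: (aut_inv Hf') => g [Hg [fg gf]].
have [w0 hw0] : exists w0, f' [:: w0] = [:: z].
  by exists (rho g z); rewrite -aut_single // gf.
have := hnth (fun _ => w0); rewrite /catb hlt ltnn subnn /aut_bd /= hw0 /=.
by move=> hh; move: hz; rewrite -hh (set_nth_default y0) // eqxx.
Qed.

Lemma rigid (u u' : word) (f f' : word -> word) : is_aut f -> is_aut f' ->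
  (forall e, catb u (aut_bd f e) = catb u' (aut_bd f' e)) -> u = u' /\ f =1 f'.
Proof.
move=> Hf Hf' H.
have s1 := rigid_size Hf Hf' H.
have s2 := rigid_size Hf' Hf (fun e => esym (H e)).
have hs : size u = size u' by apply/eqP; rewrite eqn_leq s1 s2.
have eu : u = u'.
  move: H hs {s1 s2}; case: u => [|a u] H hs; first by case: u' hs {H}.
  have := pref_catb (a :: u) (aut_bd f (fun _ => a)); rewrite H => /(pref_take (eq_leq hs)).
  by rewrite hs take_size.
split => // w; subst u'.
case: w => [|a w]; first by rewrite !aut_root.
rewrite (aut_word (a :: w) (fun _ => a) Hf) (aut_word (a :: w) (fun _ => a) Hf').
congr mkseq; have := H (catb (a :: w) (fun _ => a)).
by move=> /(congr1 (fun h => shift h (size u))); rewrite !shift_catb.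
Qed.
End Bdry.

Section Trees.
Variable d : nat.
Local Notation word := (word d).
Local Notation bdry := (bdry d).
Local Notation dtree := (dtree d).

Lemma mkseqS1 (xi : bdry) n : mkseq xi n.+1 = xi 0 :: mkseq (shift xi 1) n.
Proof. by rewrite /mkseq /shift /= -[1 in LHS]addn0 iotaDl -map_comp. Qed.

Fixpoint dtree_ind' (P : dtree -> Prop) (HL : P (Lf d))
  (HN : forall f : {ffun 'I_d -> dtree}, (forall x, P (f x)) -> P (Nd f)) (t : dtree) : P t :=
  match t with
  | Lf => HL
  | Nd f => HN f (fun x => dtree_ind' HL HN (f x))
  end.

Lemma leaves_Nd (f : {ffun 'I_d -> dtree}) :
  leaves (Nd f) = flatten [seq map (cons x) (leaves (f x)) | x <- enum 'I_d].
Proof. by rewrite /= codomE; congr flatten; apply: eq_map => x; rewrite ffunE. Qed.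

Lemma mem_leaves_Nd (f : {ffun 'I_d -> dtree}) x w :
  (x :: w \in leaves (Nd f)) = (w \in leaves (f x)).
Proof.
rewrite leaves_Nd; apply/flatten_mapP/idP.
  by case=> y _ /mapP [w' hw' [-> ->]].
by move=> h; exists x; rewrite ?mem_enum // mem_map //; move=> a b [].
Qed.

Lemma nil_leaves_Nd (f : {ffun 'I_d -> dtree}) : ([::] \in leaves (Nd f)) = false.
Proof. by rewrite leaves_Nd; apply/flatten_mapP => - [y _ /mapP [w' _]]. Qed.

Lemma uniq_flatten_map (S T : eqType) (F : S -> seq T) (s : seq S) :
  uniq s -> (forall x, uniq (F x)) ->
  (forall x y z, z \in F x -> z \in F y -> x = y) -> uniq (flatten (map F s)).
Proof.
move=> us uF dis; elim: s us => [|a s IH] //= /andP [ha us].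
rewrite cat_uniq uF IH // andbT; apply/hasPn => z /flatten_mapP [y hy hz].
apply/negP => hz'; move: ha; by rewrite -(dis _ _ _ hz hz') hy.
Qed.

Lemma leaves_uniq (t : dtree) : uniq (leaves t).
Proof.
elim/dtree_ind': t => [|f IH] //; rewrite leaves_Nd.
apply: uniq_flatten_map; first exact: enum_uniq.
  by move=> x; rewrite map_inj_uniq //; move=> a b [].
by move=> x y z /mapP [a _ ->] /mapP [b _ []].
Qed.

Lemma leaves_pref_uniq (t : dtree) (xi : bdry) u v :
  u \in leaves t -> v \in leaves t -> pref u xi -> pref v xi -> u = v.
Proof.
elim/dtree_ind': t xi u v => [|f IH] xi u v.
  by rewrite !inE => /eqP -> /eqP ->.
case: u => [|x u]; first by rewrite nil_leaves_Nd.
case: v => [|y v]; first by rewrite nil_leaves_Nd.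
rewrite !mem_leaves_Nd /pref /= => hu hv /eqP [ex hu'] /eqP [ey hv'].
subst x y; congr cons; apply: (IH (xi 0) (shift xi 1) u v hu hv); apply/eqP.
  by have := mkseqS1 xi (size u); rewrite /mkseq /= => - [<-].
by have := mkseqS1 xi (size v); rewrite /mkseq /= => - [<-].
Qed.

Lemma leaves_has_pref (t : dtree) (xi : bdry) : has (fun v : word => pref v xi) (leaves t).
Proof.
elim/dtree_ind': t xi => [|f IH] xi; first by [].
case/hasP: (IH (xi 0) (shift xi 1)) => w hw hp.
apply/hasP; exists (xi 0 :: w); first by rewrite mem_leaves_Nd.
by move: hp; rewrite /pref /= mkseqS1 => /eqP hw2; rewrite -hw2.
Qed.

Lemma find_leaf (t : dtree) (xi : bdry) i :
  i < size (leaves t) -> pref (nth [::] (leaves t) i) xi ->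
  find (fun v : word => pref v xi) (leaves t) = i.
Proof.
move=> hi hp; set j := find _ _.
have hj : j < size (leaves t) by rewrite -has_find leaves_has_pref.
have hpj : pref (nth [::] (leaves t) j) xi := nth_find [::] (leaves_has_pref t xi).
have e := leaves_pref_uniq (mem_nth _ hj) (mem_nth _ hi) hpj hp.
by apply/eqP; rewrite -(nth_uniq [::] hj hi (leaves_uniq t)) e.
Qed.

Lemma leaves_inj (a b : dtree) : leaves a =i leaves b -> a = b.
Proof.
elim/dtree_ind': a b => [|f IH] b.
  case: b => [//|g] h; have := h [::]; by rewrite nil_leaves_Nd inE eqxx.
case: b => [|g] h; first by have := h [::]; rewrite nil_leaves_Nd inE eqxx.
congr Nd; apply/ffunP => x; apply: IH => w.
by rewrite -!mem_leaves_Nd h.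
Qed.

Definition expl (u w : word) : seq word :=
  if w == u then map (rcons w) (enum 'I_d) else [:: w].

Lemma flatten_map_flatten (S T : Type) (F : S -> seq T) (ss : seq (seq S)) :
  flatten (map F (flatten ss)) = flatten (map (fun s => flatten (map F s)) ss).
Proof. by elim: ss => //= s ss IH; rewrite map_cat flatten_cat IH. Qed.

Lemma map_flatten_map (S T U : Type) (g : T -> U) (F : S -> seq T) (s : seq S) :
  map g (flatten (map F s)) = flatten (map (fun x => map g (F x)) s).
Proof. by elim: s => //= x s IH; rewrite map_cat IH. Qed.

Lemma leaves_graft (t : dtree) u : u \in leaves t ->
  leaves (graft t u) = flatten (map (expl u) (leaves t)).
Proof.
elim/dtree_ind': t u => [|f IH] u.
  rewrite inE => /eqP ->; rewrite /= /expl eqxx /= cats0 codomE.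
  rewrite (eq_map (g := fun x => [:: [:: x]])); last by move=> x; rewrite !ffunE.
  by rewrite flatten_map1.
case: u => [|x u]; first by rewrite nil_leaves_Nd.
rewrite mem_leaves_Nd => hu.
have -> : graft (Nd f) (x :: u) = Nd [ffun y => if y == x then graft (f y) u else f y] by [].
rewrite !leaves_Nd flatten_map_flatten; congr flatten; rewrite -[in RHS]map_comp; apply: eq_map => y /=.
rewrite ffunE; case: eqP => [->|ne].
  rewrite IH // map_flatten_map -map_comp; congr flatten; apply: eq_map => w /=.
  rewrite /expl eqseq_cons eqxx /=; case: eqP => // ->.
  by rewrite -map_comp.
rewrite -map_comp -[LHS]flatten_seq1 -map_comp; congr flatten; apply: eq_map => w /=.
by rewrite /expl eqseq_cons; case: eqP.
Qed.
End Trees.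

Section Trip.
Variable d : nat.
Local Notation word := (word d).
Local Notation bdry := (bdry d).
Local Notation dtree := (dtree d).
Local Notation triple := (triple d).

Lemma mkperm_natE n (g : nat -> nat) :
  (forall i, i < n -> g i < n) ->
  (forall i j, i < n -> j < n -> g i = g j -> i = j) ->
  forall i : 'I_n, val (mkperm_nat n g i) = g i.
Proof.
move=> hr hi i; rewrite /mkperm_nat /mkperm.
have E : forall j : 'I_n, val (insubd j (g j) : 'I_n) = g j.
  by move=> j; rewrite val_insubd hr.
case: injectiveP => H.
  by rewrite permE E.
exfalso; apply: H => a b /(congr1 val); rewrite !E => /hi h.
by apply: val_inj; apply: h.
Qed.

Lemma ppnatE n (s : {perm 'I_n}) (i : 'I_n) : Defs.pnat s i = val (s i).
Proof. by rewrite /Defs.pnat valK. Qed.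

Lemma fnatE n (fs : 'I_n -> word -> word) (i : 'I_n) : fnat fs i = fs i.
Proof. by rewrite /fnat valK. Qed.

Lemma pnatE' n (s : {perm 'I_n}) j (hj : j < n) : Defs.pnat s j = val (s (Ordinal hj)).
Proof. by rewrite /Defs.pnat insubT. Qed.

Lemma fnatE' n (fs : 'I_n -> word -> word) j (hj : j < n) : fnat fs j = fs (Ordinal hj).
Proof. by rewrite /fnat insubT. Qed.

Lemma pnat_inj n (s : {perm 'I_n}) a b : a < n -> b < n -> Defs.pnat s a = Defs.pnat s b -> a = b.
Proof.
move=> ha hb; rewrite (pnatE' s ha) (pnatE' s hb) => /val_inj /perm_inj.
by move/(congr1 val).
Qed.

Lemma pnat_lt n (s : {perm 'I_n}) j : j < n -> Defs.pnat s j < n.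
Proof. by move=> h; rewrite /Defs.pnat; case: insubP => [x _ _|]; [exact: ltn_ord|rewrite h]. Qed.

Lemma fnat_aut n (fs : 'I_n -> word -> word) j :
  (forall i, is_aut (fs i)) -> is_aut (fnat fs j).
Proof. by move=> H; rewrite /fnat; case: insubP => [x _ _|_]; [apply: H|apply: aut_id]. Qed.

Lemma state_nat_aut (f : word -> word) j : is_aut f -> is_aut (state_nat f j).
Proof. by move=> H; rewrite /state_nat; case: insubP => [x _ _|_]; [apply: aut_state|apply: aut_id]. Qed.

Lemma aa_spec (t : triple) xi i (hi : i < tn t) : valid t ->
  pref (nth [::] (leaves (tp t)) i) xi ->
  aa t xi = catb (nth [::] (leaves (tm t)) (Defs.tperm t (Ordinal hi)))
                 (aut_bd (@tfs _ t (Ordinal hi)) (shift xi (size (nth [::] (leaves (tp t)) i)))).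
Proof.
move=> [h1 [h2 _]] hp; rewrite /aa.
have -> : find (fun v => v == mkseq xi (size v)) (leaves (tp t)) = i.
  by apply: find_leaf => //; rewrite h2.
rewrite insubT /=; apply: functional_extensionality => m; rewrite /catb.
case: ltnP => // h; exact: set_nth_default.
Qed.

Lemma leaf_exists (t : triple) xi : valid t ->
  exists i (hi : i < tn t), pref (nth [::] (leaves (tp t)) i) xi.
Proof.
move=> [_ [h2 _]]; have := leaves_has_pref (tp t) xi.
move=> /hasP [w hw hp]; exists (index w (leaves (tp t))).
have hi : index w (leaves (tp t)) < tn t by rewrite -h2 index_mem.
by exists hi; rewrite nth_index.
Qed.

Lemma aa_ident (T : dtree) xi : aa (ident T) xi = xi.
Proof.
have hv : valid (ident T) by split => //; split => // i0; apply: aut_id.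
case: (leaf_exists xi hv) => i [hi hp].
by rewrite (aa_spec hi hv hp) /= perm1 aut_bd_id catb_shift.
Qed.

Lemma valid_ident (T : dtree) : valid (ident T).
Proof. by split => //; split => // i0; apply: aut_id. Qed.

Lemma valid_tmul (t u : triple) : valid t -> valid u -> tp t = tm u -> valid (tmul t u).
Proof.
move=> [a1 [a2 a3]] [b1 [b2 b3]] e; split; first by rewrite /= -b1 -e a2 a1.
split => //= i; apply: aut_comp => //; exact: fnat_aut.
Qed.

Lemma aa_tmul (t u : triple) xi : valid t -> valid u -> tp t = tm u ->
  aa (tmul t u) xi = aa t (aa u xi).
Proof.
move=> vt vu e; have vtu := valid_tmul vt vu e.
have en : tn t = tn u by case: vt => [h1 [h2 _]]; case: vu => [h3 _]; rewrite -h2 -h3 e.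
case: (leaf_exists xi vu) => i [hi hp].
rewrite (aa_spec hi vu hp).
have hpt : val (Defs.tperm u (Ordinal hi)) < tn t by rewrite en ltn_ord.
have hp2 : pref (nth [::] (leaves (tp t)) (val (Defs.tperm u (Ordinal hi))))
   (catb (nth [::] (leaves (tm u)) (Defs.tperm u (Ordinal hi)))
      (aut_bd (@tfs _ u (Ordinal hi)) (shift xi (size (nth [::] (leaves (tp u)) i))))).
  by rewrite e; apply: pref_catb.
rewrite (aa_spec hpt vt hp2) (@aa_spec (tmul t u) xi i hi vtu hp) /= -e shift_catb.
have hu : forall j : 'I_(tn u), is_aut (@tfs _ u j) by case: vu => [_ [_ ?]].
have ht : forall j : 'I_(tn t), is_aut (@tfs _ t j) by case: vt => [_ [_ ?]].
have Pu := pnatE' (Defs.tperm u) hi.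
have Pt := pnatE' (Defs.tperm t) hpt.
have Ft := fnatE' (@tfs _ t) hpt.
rewrite aut_bd_comp // mkperm_natE /=; first by rewrite Pu Pt Ft.
- have en1 : tn t <= tn u by rewrite en.
  have en2 : tn u <= tn t by rewrite en.
  move=> j hj; apply: (leq_trans _ en1); apply: pnat_lt.
  by apply: (leq_trans _ en2); apply: pnat_lt.
have en2 : tn u <= tn t by rewrite en.
move=> a b ha hb /pnat_inj h; apply: (pnat_inj ha hb); apply: h.
  by apply: (leq_trans _ en2); apply: pnat_lt.
by apply: (leq_trans _ en2); apply: pnat_lt.
Qed.
End Trip.

Section Caret.
Variable d : nat.
Hypothesis Hd : 1 < d.
Local Notation word := (word d).
Local Notation bdry := (bdry d).
Local Notation dtree := (dtree d).

Lemma flatten_expl_other (u : word) (s : seq word) : u \notin s ->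
  flatten (map (expl u) s) = s.
Proof.
elim: s => //= w s IH; rewrite inE negb_or => /andP [h1 h2].
by rewrite /expl eq_sym (negbTE h1) IH.
Qed.

Lemma leaves_add_caret (T : dtree) k : k < size (leaves T) ->
  leaves (add_caret T k) = take k (leaves T) ++
    map (rcons (nth [::] (leaves T) k)) (enum 'I_d) ++ drop k.+1 (leaves T).
Proof.
move=> hk; rewrite /add_caret leaves_graft ?mem_nth //.
set L := leaves T; set v := nth [::] L k.
have eL : L = take k L ++ v :: drop k.+1 L by rewrite -drop_nth // cat_take_drop.
have u := leaves_uniq T; rewrite -/L eL in u.
have [nt nd] : v \notin take k L /\ v \notin drop k.+1 L.
  move: u; rewrite cat_uniq /= => /and3P [_ /norP [h1 _] /andP [h2 _]].
  by split.
rewrite {1}eL map_cat flatten_cat /= flatten_expl_other //.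
by rewrite flatten_expl_other // /expl eqxx.
Qed.

Section Nth.
Variables (T : dtree) (k : nat).
Hypothesis hk : k < size (leaves T).
Local Notation L := (leaves T).
Local Notation L' := (leaves (add_caret T k)).

Lemma size_add_caret : size L' = size L + d.-1.
Proof.
rewrite leaves_add_caret // !size_cat size_map size_enum_ord size_takel ?size_drop; lia.
Qed.

Lemma nth_caret_lt i : i < k -> nth [::] L' i = nth [::] L i.
Proof.
move=> hi; rewrite leaves_add_caret // nth_cat size_takel; last exact: ltnW.
by rewrite hi nth_take.
Qed.

Lemma nth_caret_mid (x : 'I_d) : nth [::] L' (k + x) = rcons (nth [::] L k) x.
Proof.
rewrite leaves_add_caret // nth_cat size_takel; last exact: ltnW.
rewrite ltnNge leq_addr /= addKn nth_cat size_map size_enum_ord ltn_ord.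
by rewrite (nth_map x) ?size_enum_ord // nth_ord_enum.
Qed.

Lemma nth_caret_gt i : k + d <= i -> nth [::] L' i = nth [::] L (i - d.-1).
Proof.
move=> hi; rewrite leaves_add_caret // nth_cat size_takel; last exact: ltnW.
have -> : i < k = false by lia.
rewrite nth_cat size_map size_enum_ord.
have -> : i - k < d = false by lia.
rewrite nth_drop; congr nth; lia.
Qed.
End Nth.
End Caret.

Section G.
Variable d : nat.
Hypothesis Hd : 1 < d.
Variables (n k : nat) (s r : nat -> nat).
Hypothesis hk : k < n.
Hypothesis sr : forall i, i < n -> s i < n.
Hypothesis si : forall i j, i < n -> j < n -> s i = s j -> i = j.
Hypothesis rr : forall x, x < d -> r x < d.
Hypothesis ri : forall x y, x < d -> y < d -> r x = r y -> x = y.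

Definition adjv j := if s j < s k then s j else s j + d.-1.
Definition G i := clone_nat d s k (block_nat d r k i).

Lemma G_lt i : i < k -> G i = adjv i.
Proof. by move=> h; rewrite /G /block_nat /clone_nat (leqNgt k i) h /= h. Qed.

Lemma G_mid x : x < d -> G (k + x) = s k + r x.
Proof.
move=> h; rewrite /G /block_nat /clone_nat leq_addr ltn_add2l h /= addKn.
have h1 := rr h.
have -> : k + r x < k = false by lia.
have -> : k + r x < k + d by lia.
by rewrite addKn.
Qed.

Lemma G_gt i : k + d <= i -> G i = adjv (i - d.-1).
Proof.
move=> h; rewrite /G /block_nat /clone_nat.
have -> : (k <= i) && (i < k + d) = false by lia.
have -> : i < k = false by lia.
by have -> : i < k + d = false by lia.
Qed.

Lemma sk_ne j : j < n -> j != k -> s j != s k.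
Proof. by move=> hj hne; apply/eqP => /si h; move: hne; rewrite h ?eqxx. Qed.

Lemma adjv_range j : j < n -> adjv j < n + d.-1.
Proof. move=> hj; have := sr hj; rewrite /adjv; case: ifP; lia. Qed.

Lemma adjv_inj j j' : j < n -> j' < n -> j != k -> j' != k -> adjv j = adjv j' -> j = j'.
Proof.
move=> hj hj' n1 n2; have a1 := sk_ne hj n1; have a2 := sk_ne hj' n2.
rewrite /adjv => e; apply: si => //; move: e.
case: ifP => h1; case: ifP => h2; lia.
Qed.

Lemma adjv_mid j x : j < n -> j != k -> x < d -> adjv j != s k + x.
Proof.
move=> hj hn hx; have a := sk_ne hj hn; rewrite /adjv.
case: ifP => h; apply/eqP; lia.
Qed.

Lemma G_range i : i < n + d.-1 -> G i < n + d.-1.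
Proof.
move=> hi; case: (ltnP i k) => h1; first by rewrite G_lt // adjv_range //; lia.
case: (ltnP i (k + d)) => h2.
  have -> : i = k + (i - k) by lia.
  rewrite G_mid; last lia.
  have := rr (x := i - k) ltac:(lia); have := sr hk; lia.
by rewrite G_gt // adjv_range //; lia.
Qed.

Lemma G_inj a b : a < n + d.-1 -> b < n + d.-1 -> G a = G b -> a = b.
Proof.
have Hm : forall a b, a < n + d.-1 -> k <= a < k + d -> b < n + d.-1 -> ~~ (k <= b < k + d) ->
    G a != G b.
  move=> a' b' ha /andP [h1 h2] hb hnb.
  have -> : a' = k + (a' - k) by lia.
  rewrite G_mid; last lia.
  case: (ltnP b' k) => h3.
    rewrite G_lt // eq_sym adjv_mid //; first lia.
      by apply/eqP; lia.
    by apply: rr; lia.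
  rewrite G_gt; last lia.
  rewrite eq_sym adjv_mid //; first lia.
    by apply/eqP; lia.
  by apply: rr; lia.
move=> ha hb e.
case/boolP: (k <= a < k + d) => ma; case/boolP: (k <= b < k + d) => mb.
- move: e; have -> : a = k + (a - k) by lia.
  have -> : b = k + (b - k) by lia.
  rewrite !G_mid; try lia.
  move=> /addnI /ri h; have := h ltac:(lia) ltac:(lia); lia.
- by move: (Hm a b ha ma hb mb); rewrite e eqxx.
- by move: (Hm b a hb mb ha ma); rewrite e eqxx.
have E : forall c, c < n + d.-1 -> ~~ (k <= c < k + d) ->
    G c = adjv (if c < k then c else c - d.-1) /\ (if c < k then c else c - d.-1) < n /\
    (if c < k then c else c - d.-1) != k.
  move=> c hc hm; case: (ltnP c k) => h.
    rewrite G_lt //; split => //; split; [lia|apply/eqP; lia].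
  rewrite G_gt; last lia.
  split => //; split; [lia|apply/eqP; lia].
case: (E a ha ma) => [ea [la na]]; case: (E b hb mb) => [eb [lb nb]].
move: e; rewrite ea eb => /adjv_inj h; have := h la lb na nb.
move: ma mb; case: (ltnP a k); case: (ltnP b k); lia.
Qed.
End G.

Section Expand.
Variable d : nat.
Hypothesis Hd : 1 < d.
Local Notation word := (word d).
Local Notation bdry := (bdry d).
Local Notation dtree := (dtree d).
Local Notation triple := (triple d).

Variables (t : triple) (k : 'I_(tn t)).
Hypothesis vt : valid t.
Local Notation n := (tn t).
Local Notation s := (Defs.pnat (Defs.tperm t)).
Local Notation fk := (tfs k).
Local Notation r := (rho_nat fk).

Lemma hLn : size (leaves (tp t)) = n. Proof. by case: vt => [_ [? _]]. Qed.
Lemma hMn : size (leaves (tm t)) = n. Proof. by case: vt => [? _]. Qed.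
Lemma hfs : forall i, is_aut (@tfs _ t i). Proof. by case: vt => [_ [_ ?]]. Qed.

Lemma rho_natE (f : word -> word) (x : 'I_d) : rho_nat f x = val (rho f x).
Proof. by rewrite /rho_nat valK. Qed.

Lemma state_natE (f : word -> word) (x : 'I_d) : state_nat f x = state f x.
Proof. by rewrite /state_nat valK. Qed.

Lemma s_range i : i < n -> s i < n. Proof. exact: pnat_lt. Qed.
Lemma s_inj i j : i < n -> j < n -> s i = s j -> i = j. Proof. exact: pnat_inj. Qed.
Lemma r_range x : x < d -> r x < d.
Proof. by move=> hx; rewrite /rho_nat insubT /=. Qed.
Lemma r_inj x y : x < d -> y < d -> r x = r y -> x = y.
Proof.
move=> hx hy; rewrite /rho_nat !insubT /= => /val_inj /(aut_rho_inj (hfs k)).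
by move/(congr1 val).
Qed.

Lemma perm_expand (i : 'I_(tn (@expand _ t k))) :
  val (Defs.tperm (@expand _ t k) i) = G d k s r i.
Proof.
rewrite /= mkperm_natE //.
- by move=> j hj; apply: (G_range Hd (ltn_ord k) s_range r_range hj).
- by move=> a b ha hb; apply: (G_inj Hd (ltn_ord k) s_inj r_range r_inj ha hb).
Qed.

Lemma valid_expand : valid (@expand _ t k).
Proof.
have hsk : Defs.tperm t k < size (leaves (tm t)) by rewrite hMn.
have hk : (k : nat) < size (leaves (tp t)) by rewrite hLn.
split; first by rewrite /= size_add_caret // hMn.
split; first by rewrite /= size_add_caret // hLn.
move=> i /=; case: ifP => _; first by apply: fnat_aut; exact: hfs.
case: ifP => _; last by apply: fnat_aut; exact: hfs.
exact: state_nat_aut (hfs k).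
Qed.

Local Notation M' := (leaves (add_caret (tm t) (Defs.tperm t k))).
Local Notation M := (leaves (tm t)).
Local Notation L' := (leaves (add_caret (tp t) k)).
Local Notation L := (leaves (tp t)).

Lemma nth_M_adjv j : j < n -> j != k -> nth [::] M' (adjv d k s j) = nth [::] M (s j).
Proof.
move=> hj hne; have hsk : Defs.tperm t k < size M by rewrite hMn.
have ne := sk_ne (ltn_ord k) s_inj hj hne.
rewrite /adjv; case: ltnP => h.
  by rewrite nth_caret_lt //; rewrite ppnatE in h.
rewrite nth_caret_gt //; first by rewrite addnK.
move: ne h; rewrite ppnatE; change (\val (Defs.tperm t k)) with (nat_of_ord (Defs.tperm t k)); move=> /eqP ne h; lia.
Qed.

Lemma pref_rcons (v : word) xi : pref v xi -> pref (rcons v (xi (size v))) xi.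
Proof.
move=> /eqP hv; apply/eqP; rewrite size_rcons {1}hv.
by rewrite /mkseq -addn1 iotaD map_cat /= cats1.
Qed.

Lemma aa_expand xi : aa (@expand _ t k) xi = aa t xi.
Proof.
have hsk : Defs.tperm t k < size M by rewrite hMn.
have hk : (k : nat) < size L by rewrite hLn.
have ve := valid_expand.
case: (leaf_exists xi vt) => j [hj hp].
rewrite (aa_spec hj vt hp).
case: (ltngtP j k) => hjk.
-
  have hi : j < tn (@expand _ t k) by rewrite /=; lia.
  have hp' : pref (nth [::] (leaves (tp (@expand _ t k))) j) xi by rewrite /= nth_caret_lt.
  rewrite (@aa_spec _ (@expand _ t k) xi j hi ve hp') perm_expand /= G_lt //.
  rewrite nth_M_adjv //; last by apply/eqP; lia.
  rewrite hjk (fnatE' _ hj) (pnatE' _ hj) nth_caret_lt //.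
-
  have hi : j + d.-1 < tn (@expand _ t k) by rewrite /=; lia.
  have hp' : pref (nth [::] (leaves (tp (@expand _ t k))) (j + d.-1)) xi.
    by rewrite /= nth_caret_gt ?addnK //; lia.
  rewrite (@aa_spec _ (@expand _ t k) xi _ hi ve hp') perm_expand /= (@G_gt d Hd n k s r (ltn_ord k)); last lia.
  rewrite addnK nth_M_adjv //; last by apply/eqP; lia.
  have -> : j + d.-1 < k = false by lia.
  have -> : j + d.-1 < k + d = false by lia.
  by rewrite (fnatE' _ hj) (pnatE' _ hj) nth_caret_gt ?addnK //; lia.
subst j.
have ek : Ordinal hj = k by apply: val_inj.
rewrite ek.
set v := nth [::] L k.
set x : 'I_d := xi (size v).
have hi : k + x < tn (@expand _ t k) by rewrite /=; have := ltn_ord x; have := ltn_ord k; lia.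
have hp' : pref (nth [::] (leaves (tp (@expand _ t k))) (k + x)) xi.
  by rewrite /= nth_caret_mid //; apply: pref_rcons.
rewrite (@aa_spec _ (@expand _ t k) xi _ hi ve hp') perm_expand /= (@G_mid d Hd n k s r (ltn_ord k) r_range x (ltn_ord x)).
rewrite rho_natE ppnatE nth_caret_mid //.
have -> : k + x < k = false by lia.
have -> : k + x < k + d by rewrite ltn_add2l.
rewrite addKn state_natE size_rcons.
rewrite [in RHS](aut_bd_cons _ (hfs k)) catb_cat cats1 -/v.
have -> : shift xi (size v) 0 = x by rewrite /shift addn0.
congr catb; first exact: (nth_caret_mid hsk (rho fk x)).
by congr aut_bd; apply: functional_extensionality => m; rewrite /shift; congr xi; lia.
Qed.
End Expand.

Section Reach.
Variable d : nat.
Hypothesis Hd : 1 < d.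
Local Notation word := (word d).
Local Notation bdry := (bdry d).
Local Notation dtree := (dtree d).
Local Notation triple := (triple d).

Definition tstep (a b : dtree) : Prop := exists2 u, u \in leaves a & b = graft a u.
Definition reach := clos_refl_trans dtree tstep.

Definition upd (h : {ffun 'I_d -> dtree}) x b := [ffun y => if y == x then b else h y].

Lemma lift_reach a b : reach a b -> forall (h : {ffun 'I_d -> dtree}) x, h x = a ->
  reach (Nd h) (Nd (upd h x b)).
Proof.
elim => {a b} [a b [u hu ->]|a|a b c _ IH1 _ IH2] h x hx.
- apply: rt_step; exists (x :: u); first by rewrite mem_leaves_Nd hx.
  by rewrite /= /upd; congr Nd; apply/ffunP => y; rewrite !ffunE; case: eqP => // ->; rewrite hx.
- have -> : upd h x a = h by apply/ffunP => y; rewrite ffunE; case: eqP => // ->.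
  exact: rt_refl.
- apply: rt_trans (IH1 h x hx) _.
  have -> : upd h x c = upd (upd h x b) x c.
    by apply/ffunP => y; rewrite !ffunE; case: eqP.
  by apply: IH2; rewrite ffunE eqxx.
Qed.

Lemma reach_Nd (f g : {ffun 'I_d -> dtree}) : (forall x, reach (f x) (g x)) -> reach (Nd f) (Nd g).
Proof.
move=> H.
have K : forall s : seq 'I_d, reach (Nd f) (Nd [ffun y => if y \in s then g y else f y]).
  elim => [|x s IH].
    have -> : [ffun y => if y \in [::] then g y else f y] = f by apply/ffunP => y; rewrite ffunE.
    exact: rt_refl.
  case hx : (x \in s).
    have -> : [ffun y => if y \in x :: s then g y else f y] = [ffun y => if y \in s then g y else f y].
      by apply/ffunP => y; rewrite !ffunE inE; case: eqP => // ->; rewrite hx.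
    exact: IH.
  apply: rt_trans IH _.
  have -> : [ffun y => if y \in x :: s then g y else f y] =
    upd [ffun y => if y \in s then g y else f y] x (g x).
    by apply/ffunP => y; rewrite !ffunE inE; case: eqP => // ->; rewrite hx.
  by apply: lift_reach; rewrite ?ffunE ?hx.
have := K (enum 'I_d).
by have -> : [ffun y => if y \in enum 'I_d then g y else f y] = g
  by apply/ffunP => y; rewrite ffunE mem_enum.
Qed.

Lemma reach_Lf (T : dtree) : reach (Lf d) T.
Proof.
elim/dtree_ind': T => [|g IH]; first exact: rt_refl.
apply: (@rt_trans _ _ _ (Nd [ffun _ => Lf d])).
  by apply: rt_step; exists [::]; rewrite ?inE.
by apply: reach_Nd => x; rewrite ffunE.
Qed.

Fixpoint join (a b : dtree) : dtree :=
  match a, b with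
  | Lf, _ => b
  | _, Lf => a
  | Nd f, Nd g => Nd [ffun x => join (f x) (g x)]
  end.

Lemma reach_join_l a b : reach a (join a b).
Proof.
elim/dtree_ind': a b => [|f IH] b; first exact: reach_Lf.
case: b => [|g]; first exact: rt_refl.
by apply: reach_Nd => x; rewrite ffunE.
Qed.

Lemma reach_join_r a b : reach b (join a b).
Proof.
elim/dtree_ind': a b => [|f IH] b; first exact: rt_refl.
case: b => [|g]; first exact: reach_Lf.
by apply: reach_Nd => x; rewrite ffunE.
Qed.

Lemma tequiv_valid (a b : triple) : tequiv a b -> (valid a <-> valid b).
Proof.
elim => {a b} [a b [va [k ->]]|a|a b _ IH|a b c _ IH1 _ IH2].
- by split => // _; apply: valid_expand.
- by [].
- by split => h; apply/IH.
- by split => h; [apply/IH2/IH1|apply/IH1/IH2].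
Qed.

Lemma tequiv_aa (a b : triple) : tequiv a b -> valid a -> aa a = aa b.
Proof.
elim => {a b} [a b [va [k ->]]|a|a b ab IH|a b c ab IH1 _ IH2] v.
- by apply: functional_extensionality => xi; rewrite aa_expand.
- by [].
- by apply/esym/IH; apply/(tequiv_valid ab).
- by rewrite IH1 // IH2 //; apply/(tequiv_valid ab).
Qed.

Lemma reach_tp (t : triple) T : valid t -> reach (tp t) T ->
  exists t', tequiv t t' /\ tp t' = T.
Proof.
move=> vt /clos_rt_rt1n_iff H.
suff K : forall a T, clos_refl_trans_1n _ tstep a T -> forall t, valid t -> tp t = a ->
  exists t', tequiv t t' /\ tp t' = T by exact: K H t vt erefl.
move=> {H vt t T} a T H; elim: H => [a'|a' b c [u hu ->] _ IH] t vt ea.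
  by exists t; split => //; apply: rst_refl.
subst a'.
have hk : index u (leaves (tp t)) < tn t by case: vt => [_ [h _]]; rewrite -h index_mem.
set k : 'I_(tn t) := Ordinal hk.
have ve := valid_expand Hd k vt.
have et : tp (@expand _ t k) = graft (tp t) u by rewrite /= /add_caret nth_index.
case: (IH _ ve et) => t' [e1 e2]; exists t'; split => //.
apply: rst_trans e1; apply: rst_step; split => //; by exists k.
Qed.

Lemma reach_tm (t : triple) T : valid t -> reach (tm t) T ->
  exists t', tequiv t t' /\ tm t' = T.
Proof.
move=> vt /clos_rt_rt1n_iff H.
suff K : forall a T, clos_refl_trans_1n _ tstep a T -> forall t, valid t -> tm t = a ->
  exists t', tequiv t t' /\ tm t' = T by exact: K H t vt erefl.
move=> {H vt t T} a T H; elim: H => [a'|a' b c [u hu ->] _ IH] t vt ea.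
  by exists t; split => //; apply: rst_refl.
subst a'.
have hj : index u (leaves (tm t)) < tn t by case: vt => [h _]; rewrite -h index_mem.
set k : 'I_(tn t) := ((Defs.tperm t)^-1 (Ordinal hj))%g.
have ve := valid_expand Hd k vt.
have et : tm (@expand _ t k) = graft (tm t) u by rewrite /= /add_caret permKV /= nth_index.
case: (IH _ ve et) => t' [e1 e2]; exists t'; split => //.
apply: rst_trans e1; apply: rst_step; split => //; by exists k.
Qed.
End Reach.

Section Inj.
Variable d : nat.
Hypothesis Hd : 1 < d.
Local Notation word := (word d).
Local Notation bdry := (bdry d).
Local Notation dtree := (dtree d).
Local Notation triple := (triple d).

Lemma same_tp (a b : triple) : valid a -> valid b -> tp a = tp b -> aa a = aa b -> a = b.
Proof.
move=> va vb; case: a va => am ap an sa fa; case: b vb => bm bp bn sb fb vb va /= ep eaa.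
subst bp.
have en : an = bn by case: va => [_ [h _]]; case: vb => [_ [h' _]]; rewrite /= in h h'; rewrite -h -h'.
subst bn.
set A := Triple am ap sa fa; set B := Triple bm ap sb fb.
have key : forall i : 'I_an, nth [::] (leaves am) (sa i) = nth [::] (leaves bm) (sb i) /\ fa i =1 fb i.
  move=> i; have hi := ltn_ord i.
  have hfa : forall j, is_aut (fa j) by case: va => [_ [_ ?]].
  have hfb : forall j, is_aut (fb j) by case: vb => [_ [_ ?]].
  apply: (rigid Hd (hfa i) (hfb i)) => e.
  set v := nth [::] (leaves ap) i.
  have := congr1 (fun h => h (catb v e)) eaa => /=.
  rewrite (@aa_spec _ A _ _ hi va (pref_catb v e)) (@aa_spec _ B _ _ hi vb (pref_catb v e)) /=.
  by rewrite shift_catb (_ : Ordinal hi = i) //; apply: val_inj.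
have hsa : size (leaves am) = an by case: va.
have hsb : size (leaves bm) = an by case: vb.
have emb : am = bm.
  apply: leaves_inj => w; apply/idP/idP => hw.
    have hj : index w (leaves am) < an by rewrite -hsa index_mem.
    set j : 'I_an := ((sa^-1)%g (Ordinal hj)).
    have := (key j).1; rewrite /j permKV /= nth_index // => ->.
    by apply: mem_nth; rewrite hsb.
  have hj : index w (leaves bm) < an by rewrite -hsb index_mem.
  set j : 'I_an := ((sb^-1)%g (Ordinal hj)).
  have := (key j).1; rewrite /j permKV /= nth_index // => <-.
  by apply: mem_nth; rewrite hsa.
subst bm.
have esab : sa = sb.
  apply/permP => i; apply: val_inj; have := (key i).1.
  by move/eqP; rewrite nth_uniq ?hsa ?ltn_ord ?leaves_uniq // => /eqP.
subst sb.
have efab : fa = fb.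
  by apply: functional_extensionality => i; apply: functional_extensionality => w; apply: (key i).2.
by subst fb.
Qed.

Lemma aa_inj (t t' : triple) : valid t -> valid t' -> aa t = aa t' -> tequiv t t'.
Proof.
move=> vt vt' e.
case: (reach_tp Hd vt (reach_join_l (tp t) (tp t'))) => t1 [e1 p1].
case: (reach_tp Hd vt' (reach_join_r (tp t) (tp t'))) => t2 [e2 p2].
have v1 : valid t1 by apply/(tequiv_valid Hd e1).
have v2 : valid t2 by apply/(tequiv_valid Hd e2).
have : t1 = t2.
  apply: same_tp => //; first by rewrite p1 p2.
  by rewrite -(tequiv_aa Hd e1 vt) -(tequiv_aa Hd e2 vt') e.
move=> h; subst t2; apply: rst_trans e1 _; exact: rst_sym.
Qed.
End Inj.

Section Inv.
Variable d : nat.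
Hypothesis Hd : 1 < d.
Local Notation word := (word d).
Local Notation bdry := (bdry d).
Local Notation dtree := (dtree d).
Local Notation triple := (triple d).

Lemma aut_inv_of (f g : word -> word) : is_aut f -> cancel f g -> cancel g f -> is_aut g.
Proof.
move=> [_ H] fg gf; split; first by exists f.
by move=> u v; rewrite (H (g u)) !gf.
Qed.

Lemma inverse_exists (t : triple) : valid t -> exists s : triple, valid s /\
     tm s = tp t /\ tp s = tm t /\
     (forall xi, aa t (aa s xi) = xi) /\ (forall xi, aa s (aa t xi) = xi).
Proof.
move=> vt; have hfs : forall i, is_aut (@tfs _ t i) by case: vt => [_ [_ ?]].
have Hex : forall i, exists g, cancel (@tfs _ t i) g /\ cancel g (@tfs _ t i).
  by move=> i; case: (hfs i) => [[g ? ?] _]; exists g.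
pose ginv i := proj1_sig (constructive_indefinite_description _ (Hex i)).
have gK : forall i, cancel (@tfs _ t i) (ginv i) /\ cancel (ginv i) (@tfs _ t i).
  by move=> i; rewrite /ginv; case: constructive_indefinite_description.
have gA : forall i, is_aut (ginv i) by move=> i; case: (gK i) => h1 h2; apply: aut_inv_of (hfs i) h1 h2.
pose s := Triple (tp t) (tm t) ((Defs.tperm t)^-1)%g (fun i => ginv (((Defs.tperm t)^-1)%g i)).
have vs : valid s.
  case: vt => [h1 [h2 _]]; split; first exact: h2. split; first exact: h1. by move=> i; apply: gA.
exists s; split => //; split => //; split => //.
have fg : forall i, (@tfs _ t i) \o ginv i = id.
  by move=> i; apply: functional_extensionality => w /=; case: (gK i) => _ ->.
have gf : forall i, ginv i \o (@tfs _ t i) = id.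
  by move=> i; apply: functional_extensionality => w /=; case: (gK i) => ->.
split => xi.
- case: (leaf_exists xi vs) => j [hj hp].
  rewrite (aa_spec hj vs hp) /=.
  set i := (((Defs.tperm t)^-1)%g (Ordinal hj)).
  have hi := ltn_ord i.
  have hp2 : pref (nth [::] (leaves (tp t)) i) (catb (nth [::] (leaves (tp t)) i)
     (aut_bd (ginv i) (shift xi (size (nth [::] (leaves (tm t)) j))))) by apply: pref_catb.
  rewrite (aa_spec hi vt hp2) (_ : Ordinal hi = i); last by apply: val_inj.
  rewrite shift_catb aut_bd_comp // fg aut_bd_id /i permKV /=.
  exact: catb_shift.
- case: (leaf_exists xi vt) => j [hj hp].
  rewrite (aa_spec hj vt hp) /=.
  set i := Defs.tperm t (Ordinal hj).
  have hi := ltn_ord i.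
  have hp2 : pref (nth [::] (leaves (tm t)) i) (catb (nth [::] (leaves (tm t)) i)
     (aut_bd (tfs (Ordinal hj)) (shift xi (size (nth [::] (leaves (tp t)) j))))) by apply: pref_catb.
  rewrite (@aa_spec _ s _ _ hi vs hp2) (_ : Ordinal hi = i) /=; last by apply: val_inj.
  rewrite shift_catb /i permK aut_bd_comp // gf aut_bd_id.
  exact: catb_shift.
Qed.
End Inv.

Theorem mainTheorem1 (d : nat) (Hd : 1 < d) :
  (forall t u : triple d, valid t -> valid u ->
     exists t' u', tequiv t t' /\ tequiv u u' /\ tp t' = tm u') /\
  (forall t u : triple d, valid t -> valid u -> tp t = tm u -> valid (tmul t u)) /\
  (forall t t' u u' : triple d, valid t -> valid u ->
     tequiv t t' -> tequiv u u' -> tp t = tm u -> tp t' = tm u' ->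
     tequiv (tmul t u) (tmul t' u')) /\
  (forall t u v : triple d, valid t -> valid u -> valid v ->
     tp t = tm u -> tp u = tm v ->
     tequiv (tmul (tmul t u) v) (tmul t (tmul u v))) /\
  (forall T : dtree d, tequiv (ident T) (ident (Lf d))) /\
  (forall t : triple d, valid t ->
     tequiv (tmul (ident (tm t)) t) t /\ tequiv (tmul t (ident (tp t))) t) /\
  (forall t : triple d, valid t -> exists s : triple d, valid s /\
     tm s = tp t /\ tp s = tm t /\
     tequiv (tmul t s) (ident (tm t)) /\ tequiv (tmul s t) (ident (tp t))) /\
  (forall t t' : triple d, valid t -> tequiv t t' -> forall xi, aa t xi =1 aa t' xi) /\
  (forall t u : triple d, valid t -> valid u -> tp t = tm u ->
     forall xi, aa (tmul t u) xi =1 aa t (aa u xi)) /\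
  (forall t t' : triple d, valid t -> valid t' ->
     (forall xi, aa t xi =1 aa t' xi) -> tequiv t t') /\
  (forall h : bdry d -> bdry d, is_AAut h ->
     exists t, valid t /\ forall xi, h xi =1 aa t xi).
Proof.
have FE : forall (a b : triple d), (forall xi, aa a xi = aa b xi) -> aa a = aa b.
  by move=> a b H; apply: functional_extensionality.
split.
  move=> t u vt vu.
  case: (reach_tp Hd vt (reach_join_l (tp t) (tm u))) => t' [e1 p1].
  case: (reach_tm Hd vu (reach_join_r (tp t) (tm u))) => u' [e2 p2].
  by exists t', u'; rewrite p1 p2.
split; first exact: valid_tmul.
split.
  move=> t t' u u' vt vu e1 e2 p p'.
  have vt' : valid t' by apply/(tequiv_valid Hd e1).
  have vu' : valid u' by apply/(tequiv_valid Hd e2).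
  apply: aa_inj => //; try exact: valid_tmul.
  apply: FE => xi; rewrite !aa_tmul //.
  by rewrite (tequiv_aa Hd e1 vt) (tequiv_aa Hd e2 vu).
split.
  move=> t u v vt vu vv p q.
  have vtu := valid_tmul vt vu p; have vuv := valid_tmul vu vv q.
  apply: aa_inj => //; first exact: valid_tmul.
    exact: valid_tmul.
  by apply: FE => xi; rewrite !aa_tmul.
split.
  move=> T; apply: aa_inj => //; try exact: valid_ident.
  by apply: FE => xi; rewrite !aa_ident.
split.
  move=> t vt; split; apply: aa_inj => //; try (apply: valid_tmul => //; exact: valid_ident).
    by apply: FE => xi; rewrite aa_tmul ?aa_ident //; exact: valid_ident.
  by apply: FE => xi; rewrite aa_tmul ?aa_ident //; exact: valid_ident.
split.
  move=> t vt; case: (inverse_exists vt) => s [vs [e1 [e2 [h1 h2]]]].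
  exists s; split => //; split => //; split => //; split; apply: aa_inj => //;
    try (apply: valid_tmul => //; by rewrite ?e1 ?e2); try exact: valid_ident.
    by apply: FE => xi; rewrite aa_tmul ?e1 // aa_ident h1.
  by apply: FE => xi; rewrite aa_tmul ?e2 // aa_ident h2.
split.
  by move=> t t' vt e xi; rewrite (tequiv_aa Hd e vt).
split.
  by move=> t u vt vu p xi; rewrite aa_tmul.
split.
  move=> t t' vt vt' H; apply: aa_inj => //; apply: FE => xi.
  by apply: functional_extensionality => m; apply: H.
by move=> h [t [vt H]]; exists t.
Qed.
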